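(* Let $n\le 4$ and let $S$ be a real symmetric positive-definite $n\times n$ matrix. Then $S$ is Venkov-reduced with respect to $I_n$, i.e. $S\bullet I_n\le (gSg^{T})\bullet I_n$ for all $g\in GL_n(\mathbb Z)$, if and only if $gSg^{T}$ is Minkowski-reduced for some permutation matrix $g\in GL_n(\mathbb Z)$.
   Context: $S\bullet T:=\mathrm{Trace}(ST)$ for symmetric matrices $S,T$. Let $\mathbf e_1,\dots,\mathbf e_n$ be the standard basis of $\mathbb R^n$; a set $\{v_1,\dots,v_i\}\subset\mathbb Z^n$ is primitive if it is a subset of a basis of $\mathbb Z^n$. A symmetric positive-definite $S=(s_{ij})$ is Minkowski-reduced if for each $i=1,\dots,n$, $s_{ii}=\min\{v^{T}Sv: \{\mathbf e_1,\dots,\mathbf e_{i-1},v\}\text{ is a primitive set of }\mathbb Z^n\}$. *)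

(* Defs.v *)
From HB Require Import structures.
From mathcomp Require Import all_boot all_order all_algebra all_fingroup.
From mathcomp Require Import reals.
Set Implicit Arguments. Unset Strict Implicit. Unset Printing Implicit Defensive.
Import Order.TTheory GRing.Theory Num.Theory.
Local Open Scope ring_scope.

Definition bullet (R : realType) (n : nat) (S T : 'M[R]_n) : R := \tr (S *m T).

Definition intmx (R : realType) (m n : nat) (g : 'M[int]_(m, n)) : 'M[R]_(m, n) :=
  map_mx (fun z : int => z%:~R) g.

Definition qform (R : realType) (n : nat) (S : 'M[R]_n) (v : 'rV[int]_n) : R :=
  (intmx R v *m S *m (intmx R v)^T) 0 0.

Definition symmetric_mx (R : realType) (n : nat) (S : 'M[R]_n) : Prop := S^T = S.

Definition pos_def (R : realType) (n : nat) (S : 'M[R]_n) : Prop :=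
  forall x : 'rV[R]_n, x != 0 -> 0 < (x *m S *m x^T) 0 0.

(* GL_n(Z): integer matrices invertible over Z (det = +-1) *)
Definition GLnZ (n : nat) (g : 'M[int]_n) : Prop := g \in unitmx.

(* The family e_1, ..., e_{i-1}, v is primitive, i.e. extends to a basis of
   Z^n: there is B in GL_n(Z) whose rows 0..i-1 are e_1..e_{i-1} and whose
   row i is v (indices 0-based). *)
Definition primitive_ext (n : nat) (i : 'I_n) (v : 'rV[int]_n) : Prop :=
  exists B : 'M[int]_n, GLnZ B /\
    (forall j : 'I_n, (j < i)%N -> row j B = row j 1%:M) /\ row i B = v.

Definition minkowski_reduced (R : realType) (n : nat) (S : 'M[R]_n) : Prop :=
  forall i : 'I_n,
    (exists v, primitive_ext i v /\ qform S v = S i i) /\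
    (forall v, primitive_ext i v -> S i i <= qform S v).

Definition venkov_reduced (R : realType) (n : nat) (S : 'M[R]_n) : Prop :=
  forall g : 'M[int]_n, GLnZ g ->
    bullet S 1%:M <= bullet (intmx R g *m S *m (intmx R g)^T) 1%:M.

(* Main.v *)
Require Import Defs.
From HB Require Import structures.
From mathcomp Require Import all_boot all_order all_algebra all_fingroup.
From mathcomp Require Import reals.
From mathcomp Require Import ring lra zify.
Set Implicit Arguments. Unset Strict Implicit. Unset Printing Implicit Defensive.
Import Order.TTheory GRing.Theory Num.Theory.
Local Open Scope ring_scope.

Definition Bf (R : realType) (n : nat) (T : 'M[R]_n) (x y : 'rV[R]_n) : R :=
  (x *m T *m y^T) 0 0.
Definition Qr (R : realType) (n : nat) (T : 'M[R]_n) (x : 'rV[R]_n) : R := Bf T x x.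

Lemma BfDl (R : realType) (n : nat) (T : 'M[R]_n) x y z :
  Bf T (x + y) z = Bf T x z + Bf T y z.
Proof. by rewrite /Bf !mulmxDl mxE. Qed.

Lemma BfDr (R : realType) (n : nat) (T : 'M[R]_n) x y z :
  Bf T x (y + z) = Bf T x y + Bf T x z.
Proof. by rewrite /Bf linearD /= mulmxDr mxE. Qed.

Lemma BfZl (R : realType) (n : nat) (T : 'M[R]_n) a x y :
  Bf T (a *: x) y = a * Bf T x y.
Proof. by rewrite /Bf -!scalemxAl mxE. Qed.

Lemma BfZr (R : realType) (n : nat) (T : 'M[R]_n) a x y :
  Bf T x (a *: y) = a * Bf T x y.
Proof. by rewrite /Bf linearZ /= -scalemxAr mxE. Qed.

Lemma QrD (R : realType) (n : nat) (T : 'M[R]_n) x t e :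
  Qr T (x + t *: e) = Qr T x + t * (Bf T x e + Bf T e x) + t ^+ 2 * Qr T e.
Proof. rewrite /Qr !BfDl !BfDr !BfZl !BfZr; ring. Qed.

Lemma QrZ (R : realType) (n : nat) (T : 'M[R]_n) a x :
  Qr T (a *: x) = a * (a * Qr T x).
Proof. by rewrite /Qr BfZl BfZr. Qed.

Lemma Qr_delta (R : realType) (n : nat) (T : 'M[R]_n) (i : 'I_n) :
  Qr T (delta_mx 0 i) = T i i.
Proof. by rewrite /Qr /Bf -rowE trmx_delta -colE !mxE. Qed.

Lemma intmxM (R : realType) m n p (A : 'M[int]_(m,n)) (B : 'M[int]_(n,p)) :
  intmx R (A *m B) = intmx R A *m intmx R B.
Proof. exact: (map_mxM (intr : {rmorphism int -> R})). Qed.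

Lemma intmx_perm (R : realType) n (s : 'S_n) : intmx R (perm_mx s) = perm_mx s.
Proof. exact: (map_perm_mx (intr : {rmorphism int -> R})). Qed.

Lemma intmx_delta (R : realType) m n i j : intmx R (delta_mx i j : 'M[int]_(m,n)) = delta_mx i j.
Proof. exact: (map_delta_mx (intr : {rmorphism int -> R})). Qed.

Lemma intmx_tr (R : realType) m n (A : 'M[int]_(m,n)) : intmx R A^T = (intmx R A)^T.
Proof. by apply/matrixP => i j; rewrite !mxE. Qed.

Lemma intmx_row (R : realType) m n (A : 'M[int]_(m,n)) i : intmx R (row i A) = row i (intmx R A).
Proof. by apply/matrixP => a b; rewrite !mxE. Qed.

Lemma qform_delta (R : realType) (n : nat) (T : 'M[R]_n) (i : 'I_n) :
  qform T (delta_mx 0 i) = T i i.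
Proof. by rewrite /qform intmx_delta; exact: Qr_delta. Qed.

Lemma conv_choice (R : realType) (q b d M th : R) :
  0 <= th <= 1 -> 0 <= d <= M ->
  ~ (q - th * b + th ^+ 2 * d <= q + M / 4) ->
  q + (1 - th) * b + (1 - th) ^+ 2 * d <= q + M / 4.
Proof.
move=> /andP[h0 h1] /andP[d0 dM] H.
have H' : q + M / 4 < q - th * b + th ^+ 2 * d by rewrite ltNge; apply/negP.
have hth : th * (1 - th) <= 1/4.
  have := sqr_ge0 (th - 1/2). lra.
have thp : 0 < th.
  rewrite lt_def h0 andbT; apply/eqP => th0; move: H'; rewrite th0; lra.
have key : th * ((q + (1 - th) * b + (1 - th) ^+ 2 * d) - (q + M / 4))
   = th * (1 - th) * d - (1 - th) * ((q - th * b + th ^+ 2 * d) - q) - th * M / 4.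
  ring.
have k2 : th * (1 - th) * d <= M / 4 by nra.
have k3 : (1 - th) * (M / 4) <= (1 - th) * ((q - th * b + th ^+ 2 * d) - q) by nra.
have : th * ((q + (1 - th) * b + (1 - th) ^+ 2 * d) - (q + M / 4)) <= 0 by rewrite key; nra.
nra.
Qed.
Definition rnd (R : realType) n m (w : 'rV[int]_n) (c : 'rV[R]_n) : 'rV[R]_n :=
  \row_j (if (j < m)%N then (w 0 j)%:~R else c 0 j).

Lemma avg (R : realType) (n : nat) (T : 'M[R]_n) (k : 'I_n) (M : R) :
  0 <= M -> (forall j : 'I_n, (j < k)%N -> 0 <= T j j <= M) ->
  forall m, (m <= k)%N -> forall c : 'rV[R]_n, exists w : 'rV[int]_n,
  Qr T (rnd m w c) <= Qr T c + m%:R * M / 4.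
Proof.
move=> M0 hT; elim=> [|m IH] hm c.
  exists 0; have -> : rnd 0 0 c = c by apply/rowP => j; rewrite mxE.
  by rewrite mul0r mul0r addr0.
have mn : (m < n)%N by exact: ltn_trans hm (ltn_ord k).
pose j0 := Ordinal mn.
have /andP[d0 dM] := hT j0 hm.
pose x := c 0 j0; pose a := Num.floor x; pose th := x - a%:~R.
have th01 : 0 <= th <= 1.
  have := floor_itv x; rewrite -/a intrD /th => /andP[h1 h2]; apply/andP; split; lra.
pose e : 'rV[R]_n := delta_mx 0 j0.
pose b := Bf T c e + Bf T e c.
have Qe : Qr T e = T j0 j0 by rewrite Qr_delta.
have [ai [dl [Hai Hq]]] : exists ai : int, exists dl : R,
   (x + dl = ai%:~R) /\ Qr T (c + dl *: e) <= Qr T c + M / 4.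
  case: (boolP (Qr T c - th * b + th ^+ 2 * T j0 j0 <= Qr T c + M / 4)) => H.
    exists a, (- th); split; first by rewrite /th; ring.
    rewrite QrD Qe -/b; move: H; rewrite sqrrN; lra.
  exists (a + 1), (1 - th); split; first by rewrite /th intrD; ring.
  rewrite QrD Qe -/b; apply: conv_choice => //; first by rewrite d0 dM.
  by apply/negP.
have [w Hw] := IH (ltnW hm) (c + dl *: e).
exists (\row_j (if j == j0 then ai else w 0 j)).
have -> : rnd m.+1 (\row_j (if j == j0 then ai else w 0 j)) c = rnd m w (c + dl *: e).
  apply/rowP => j; rewrite !mxE.
  case: (ltngtP j m) => hj.
  - have -> : (j < m.+1)%N by apply: ltnW.
    have -> : (j == j0) = false by apply/negbTE; rewrite -val_eqE /= neq_ltn hj.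
    by [].
  - rewrite ltnS leqNgt hj /=.
    have -> : (j == j0) = false by apply/negbTE; rewrite -val_eqE /= neq_ltn hj orbT.
    by rewrite mulr0 addr0.
  - have -> : j = j0 by apply/val_inj.
    by rewrite eqxx ltnSn /= mulr1 -Hai.
apply: (le_trans Hw).
have E : (m.+1)%:R * M / 4 = m%:R * M / 4 + M / 4 :> R by rewrite -addn1 natrD; ring.
rewrite E; lra.
Qed.
Definition Uprop (R : realType) n (T : 'M[R]_n) := forall (k : 'I_n) (z : 'rV[int]_n),
  z 0 k = 1 -> (forall j : 'I_n, (k < j)%N -> z 0 j = 0) -> T k k <= qform T z.
Definition sortedd (R : realType) n (T : 'M[R]_n) :=
  forall j l : 'I_n, (j <= l)%N -> T j j <= T l l.
Definition diagnn (R : realType) n (T : 'M[R]_n) := forall j, 0 <= T j j.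

Lemma KL1 (R : realType) n (T : 'M[R]_n) : (n <= 4)%N -> diagnn T -> sortedd T -> Uprop T ->
  forall (x : 'rV[int]_n) (k : 'I_n), x 0 k != 0 ->
  (forall j : 'I_n, (k < j)%N -> x 0 j = 0) -> T k k <= qform T x.
Proof.
move=> n4 hd hs hU x k xk0 hx.
pose m := x 0 k.
have qN : qform T (- x) = qform T x.
  change (Qr T (intmx R (-x)) = Qr T (intmx R x)).
  have -> : intmx R (-x) = (-1) *: intmx R x.
    by apply/matrixP => a b; rewrite !mxE intrN mulN1r.
  by rewrite QrZ; ring.
have [m1|m1] := eqVneq m 1; first exact: hU.
have [mN1|mN1] := eqVneq m (-1).
  rewrite -qN; apply: hU; first by rewrite mxE -/m mN1 opprK.
  by move=> j hj; rewrite mxE hx // oppr0.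
have m2 : (2 <= m) || (m <= -2) by move: xk0; rewrite -/m; lia.
pose mR : R := m%:~R.
have mR0 : mR != 0 by rewrite intr_eq0.
pose c := mR^-1 *: intmx R x.
have hT' : forall j : 'I_n, (j < k)%N -> 0 <= T j j <= T k k.
  by move=> j hj; rewrite hd /=; apply: hs; apply: ltnW.
have [w Hw] := @avg R n T k (T k k) (hd k) hT' k (leqnn k) c.
pose v : 'rV[int]_n := \row_j (if (j < k)%N then w 0 j else (j == k)%:Z).
have Hv : intmx R v = rnd k w c.
  apply/rowP => j; rewrite !mxE; case: ifP => // hjk.
  case: (eqVneq j k) => [->|njk].
    by rewrite mulVf.
  have hkj : (k < j)%N by rewrite ltnNge leq_eqVlt negb_or hjk andbT; exact: njk.
  by rewrite hx // mulr0.
have U1 := hU k v.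
rewrite /qform Hv in U1.
have {U1}U1 : T k k <= Qr T (rnd k w c).
  apply: U1; first by rewrite mxE ltnn eqxx.
  by move=> j hj; rewrite mxE ltnNge (ltnW hj) /=; case: eqVneq hj => // ->; rewrite ltnn.
have Ex : intmx R x = mR *: c by rewrite scalerA mulfV // scale1r.
change (T k k <= Qr T (intmx R x)); rewrite Ex QrZ.
have k3 : (k%:R : R) <= 3.
  have : (k <= 3)%N by have := ltn_ord k; lia.
  by rewrite -(ler_nat R).
have mm : 4 <= mR * mR.
  case/orP: m2 => hm.
    have : 2 <= mR by rewrite -(ler_int R) in hm.
    nra.
  have : mR <= -2 by rewrite -(ler_int R) in hm.
  nra.
have Tk0 := hd k.
have Qc : T k k - k%:R * T k k / 4 <= Qr T c by lra.
have Qc0 : 0 <= Qr T c by nra.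
have : 4 * Qr T c <= mR * mR * Qr T c by nra.
nra.
Qed.

Lemma KL2 (R : realType) n (T : 'M[R]_n) : (n <= 4)%N -> diagnn T -> sortedd T -> Uprop T ->
  forall (x : 'rV[int]_n) (l : 'I_n), x 0 l != 0 -> T l l <= qform T x.
Proof.
move=> n4 hd hs hU x l Hl.
case: (@arg_maxnP _ l (fun j => x 0 j != 0) (fun j : 'I_n => nat_of_ord j) Hl) => k xk0 kmax.
apply: le_trans (hs l k (kmax l Hl)) (KL1 n4 hd hs hU xk0 _).
move=> j hkj; apply/eqP; apply: contraTT hkj => H; rewrite -leqNgt; exact: kmax j H.
Qed.
Lemma tr_qform (R : realType) n (T : 'M[R]_n) (h : 'M[int]_n) :
  \tr (intmx R h *m T *m (intmx R h)^T) = \sum_r qform T (row r h).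
Proof.
rewrite /mxtrace; apply: eq_bigr => r _.
rewrite /qform intmx_row !mxE; apply: eq_bigr => j _; rewrite !mxE; congr (_ * _).
by apply: eq_bigr => a _; rewrite !mxE.
Qed.

Lemma trace_bound (R : realType) n (T : 'M[R]_n) : (n <= 4)%N -> diagnn T -> sortedd T -> Uprop T ->
  forall h : 'M[int]_n, GLnZ h -> \tr T <= \tr (intmx R h *m T *m (intmx R h)^T).
Proof.
move=> n4 hd hs hU h hG.
have [s Hs] : exists s : 'S_n, \prod_i h i (s i) != 0.
  case: (boolP [exists s : 'S_n, \prod_i h i (s i) != 0]) => [/existsP //|/existsPn H].
  move: hG; rewrite /GLnZ unitmxE.
  have -> : \det h = 0.
    rewrite /determinant; apply: big1 => s _.
    by move: (H s); rewrite negbK => /eqP ->; rewrite mulr0.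
  by rewrite unitr0.
rewrite tr_qform /mxtrace (reindex_inj (@perm_inj _ s)) /=.
apply: ler_sum => r _; apply: KL2 => //.
rewrite mxE; move/prodf_neq0: Hs; exact.
Qed.
Definition Ez n (k : 'I_n) (z : 'rV[int]_n) : 'M[int]_n :=
  \matrix_(a, b) if a == k then z 0 b else ((a == b)%:R).

Lemma Ez_GL n (k : 'I_n) (z : 'rV[int]_n) : z 0 k = 1 ->
  (forall j : 'I_n, (k < j)%N -> z 0 j = 0) -> GLnZ (Ez k z).
Proof.
move=> zk hz; rewrite /GLnZ unitmxE det_trig.
  rewrite big1 ?unitr1 // => i _; rewrite mxE; case: (eqVneq i k) => [->|_] //.
  by rewrite eqxx.
apply/forallP => i; apply/forallP => j; apply/implyP => hij; rewrite mxE.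
case: (eqVneq i k) => [ik|_]; first by rewrite hz // -ik.
by case: (eqVneq i j) hij => [->|]; rewrite ?ltnn.
Qed.

Lemma Ez_row_ne n (k : 'I_n) (z : 'rV[int]_n) j : j != k -> row j (Ez k z) = row j 1%:M.
Proof. by move=> hj; apply/rowP => b; rewrite !mxE (negbTE hj). Qed.

Lemma Ez_row_k n (k : 'I_n) (z : 'rV[int]_n) : row k (Ez k z) = z.
Proof. by apply/rowP => b; rewrite !mxE eqxx. Qed.

Lemma venkov_U (R : realType) n (T : 'M[R]_n) : venkov_reduced T -> Uprop T.
Proof.
move=> hv k z zk hz.
have := hv _ (Ez_GL zk hz); rewrite /bullet !mulmx1 tr_qform /mxtrace.
rewrite (bigD1 k) //= [X in _ <= X](bigD1 k) //= Ez_row_k.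
have -> : \sum_(i < n | i != k) qform T (row i (Ez k z)) = \sum_(i < n | i != k) T i i.
  by apply: eq_bigr => r hr; rewrite Ez_row_ne // row1 qform_delta.
lra.
Qed.

Lemma venkov_mink (R : realType) n (T : 'M[R]_n) : (n <= 4)%N -> diagnn T -> sortedd T ->
  venkov_reduced T -> minkowski_reduced T.
Proof.
move=> n4 hd hs hv; have hU := venkov_U hv.
move=> i; split.
  exists (delta_mx 0 i); split; last exact: qform_delta.
  exists 1%:M; split; first exact: unitmx1.
  by split => //; exact: row1.
move=> v [B [hB [hrows hvi]]].
have [l [il vl]] : exists l : 'I_n, (i <= l)%N /\ v 0 l != 0.
  case: (boolP [exists l : 'I_n, (i <= l)%N && (v 0 l != 0)]) => [/existsP [l /andP[]]|/existsPn H].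
    by move=> a b; exists l.
  have vz : forall l : 'I_n, (i <= l)%N -> v 0 l = 0.
    by move=> l il; move: (H l); rewrite il /= negbK => /eqP.
  pose a : 'rV[int]_n := \row_r (if (r < i)%N then - v 0 r else (r == i)%:Z).
  have aB : a *m B = 0.
    apply/rowP => c; rewrite !mxE (bigD1 i) //= mxE ltnn eqxx.
    have -> : B i c = v 0 c by rewrite -hvi mxE.
    rewrite (eq_bigr (fun r : 'I_n => if (r < i)%N then - v 0 r * (r == c)%:R else 0)); last first.
      move=> r rne; rewrite mxE; case: ifP => hr.
        have E := hrows r hr.
        by have := congr1 (fun M : 'rV[int]_n => M 0 c) E; rewrite !mxE => ->.
      by rewrite (negbTE rne) mul0r.
    case: (ltnP c i) => hc.
      rewrite (bigD1 c) /=; last by rewrite -val_eqE /= neq_ltn hc.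
      rewrite hc eqxx big1 /=; first by rewrite mulr1 addr0; lia.
      move=> r /andP[_ rc]; case: ifP => _ //; by rewrite (negbTE rc) mulr0.
    rewrite vz // big1 //= => r _; case: ifP => hr //.
    have -> : (r == c) = false.
      by apply/negbTE; rewrite -val_eqE /= neq_ltn (leq_trans hr hc).
    by rewrite mulr0.
  have a0 : a = 0 by rewrite -[a](mulmxK hB) aB mul0mx.
  by have := congr1 (fun M : 'rV[int]_n => M 0 i) a0; rewrite !mxE ltnn eqxx.
exact: le_trans (hs i l il) (KL2 n4 hd hs hU vl).
Qed.
Lemma PSP_entry (R : realType) n (S : 'M[R]_n) (s : 'S_n) i j :
  (perm_mx s *m S *m (perm_mx s)^T) i j = S (s i) (s j).
Proof. by rewrite -row_permE tr_perm_mx -col_permE !mxE. Qed.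

Lemma PSP_tr (R : realType) n (S : 'M[R]_n) (s : 'S_n) :
  \tr (perm_mx s *m S *m (perm_mx s)^T) = \tr S.
Proof. by rewrite mxtrace_mulC mulmxA tr_perm_mx -perm_mxM mulVg perm_mx1 mul1mx. Qed.

Lemma PSP_back (R : realType) n (S : 'M[R]_n) (s : 'S_n) :
  perm_mx s^-1 *m (perm_mx s *m S *m (perm_mx s)^T) *m (perm_mx s^-1)^T = S.
Proof.
rewrite !tr_perm_mx invgK !mulmxA -perm_mxM mulVg perm_mx1 mul1mx.
by rewrite -mulmxA -perm_mxM mulVg perm_mx1 mulmx1.
Qed.

Lemma venkov_perm (R : realType) n (S : 'M[R]_n) (s : 'S_n) : venkov_reduced S ->
  venkov_reduced (intmx R (perm_mx s) *m S *m (intmx R (perm_mx s))^T).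
Proof.
move=> hv g hg; rewrite intmx_perm /bullet !mulmx1 PSP_tr.
have hg' : GLnZ (g *m perm_mx s) by rewrite /GLnZ unitmx_mul hg unitmx_perm.
have := hv _ hg'; rewrite /bullet !mulmx1 intmxM intmx_perm trmx_mul !mulmxA.
exact: id.
Qed.

Lemma pd_diag (R : realType) n (S : 'M[R]_n) : pos_def S -> forall i, 0 < S i i.
Proof.
move=> hpd i.
have x0 : (delta_mx 0 i : 'rV[R]_n) != 0.
  apply/eqP => /matrixP /(_ 0 i); rewrite !mxE !eqxx /= => /eqP; by rewrite oner_eq0.
have := hpd _ x0; change (0 < Qr S (delta_mx 0 i) -> 0 < S i i); by rewrite Qr_delta.
Qed.

Lemma row_perm_mx n (t : 'S_n) r : row r (perm_mx t : 'M[int]_n) = delta_mx 0 (t r).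
Proof. by apply/rowP => b; rewrite !mxE eq_sym. Qed.
Theorem mainTheorem3 (R : realType) (n : nat) (S : 'M[R]_n) :
  (n <= 4)%N -> symmetric_mx S -> pos_def S ->
  (venkov_reduced S <->
   exists s : 'S_n,
     minkowski_reduced (intmx R (perm_mx s) *m S *m (intmx R (perm_mx s))^T)).
Proof.
move=> n4 hsym hpd; have hdS := pd_diag hpd.
split.
  move=> hv.
  pose Phi (s : 'S_n) : R := \sum_(j < n) (j%:R : R) * S (s j) (s j).
  case: (@arg_maxP _ R _ (1%g : 'S_n) xpredT Phi isT) => s0 _ smax.
  exists s0.
  have Te : forall i j, (intmx R (perm_mx s0) *m S *m (intmx R (perm_mx s0))^T) i j
                 = S (s0 i) (s0 j) by move=> i j; rewrite intmx_perm PSP_entry.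
  apply: venkov_mink => //; last exact: venkov_perm.
    by move=> j; rewrite Te; apply: ltW.
  move=> j l jl; rewrite !Te leNgt; apply/negP => H.
  have jl' : (j < l)%N.
    rewrite ltn_neqAle jl andbT; apply/negP => /eqP e.
    have e' : j = l by apply: val_inj.
    by move: H; rewrite e' ltxx.
  pose f : 'I_n -> R := fun y => S (s0 y) (s0 y).
  pose t := tperm j l.
  have E1 : Phi (t * s0)%g = \sum_(y < n) ((t y)%:R : R) * f y.
    rewrite /Phi (reindex_inj (@perm_inj _ t)) /=.
    by apply: eq_bigr => y _; rewrite permM tpermK.
  have E2 : Phi (t * s0)%g - Phi s0 = (l%:R - j%:R) * (f j - f l).
    rewrite E1 /Phi -sumrB (bigD1 j) //= (bigD1 l) /=; last by rewrite eq_sym; rewrite -val_eqE /= neq_ltn jl'.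
    rewrite big1; last first.
      move=> y /andP[yj yl]; rewrite tpermD; last by rewrite eq_sym.
        by rewrite /f subrr.
      by rewrite eq_sym.
    rewrite tpermL tpermR /f; ring.
  have : Phi (t * s0)%g <= Phi s0 by apply: smax.
  have : (j%:R : R) < l%:R by rewrite ltr_nat.
  move: H; rewrite -/(f l) -/(f j) => H.
  move=> hjl hP; nra.
case=> s hm.
set T := intmx R (perm_mx s) *m S *m (intmx R (perm_mx s))^T in hm.
have Te : forall i j, T i j = S (s i) (s j) by move=> i j; rewrite /T intmx_perm PSP_entry.
have hd : diagnn T by move=> j; rewrite Te; apply: ltW.
have hs : sortedd T.
  move=> j l jl.
  have [_ H] := hm j.
  rewrite -(qform_delta T l); apply: H.
  exists (perm_mx (tperm j l)); split; first exact: unitmx_perm.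
  split; last by rewrite row_perm_mx tpermL.
  move=> r hr; rewrite row_perm_mx row1 tpermD //.
    by rewrite eq_sym -val_eqE /= neq_ltn hr.
  by rewrite eq_sym -val_eqE /= neq_ltn (leq_trans hr jl).
have hU : Uprop T.
  move=> k z zk hz; have [_ H] := hm k; apply: H.
  exists (Ez k z); split; first exact: Ez_GL.
  split; last exact: Ez_row_k.
  move=> j hj; apply: Ez_row_ne; by rewrite -val_eqE /= neq_ltn hj.
have hvT : venkov_reduced T.
  move=> h hh; rewrite /bullet !mulmx1; exact: trace_bound.
have := venkov_perm (s^-1) hvT.
by rewrite /T !intmx_perm PSP_back.
Qed.
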